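(* Suppose $M:\alpha\mapsto M_\alpha=(E,\mathcal{B}_\alpha)$ is a matroid flock with support matroid $N=(E,\mathcal{B})$. Then $\mathcal{B}=\bigcup_{\alpha\in\mathbb{Z}^E}\mathcal{B}_\alpha$.
   Context: $E$ is a finite set; $(E,\mathcal{B})$ denotes the matroid on $E$ with basis set $\mathcal{B}$. $e_I:=\sum_{i\in I}e_i$ ($e_i$ unit vectors), $\mathbf{1}:=e_E$. A matroid flock of rank $d$ on $E$ is a map $M$ assigning to each $\alpha\in\mathbb{Z}^E$ a matroid $M_\alpha$ on $E$ of rank $d$ with (MF1) $M_\alpha/i=M_{\alpha+e_i}\setminus i$ for all $\alpha$, $i$ (contraction, deletion); and (MF2) $M_\alpha=M_{\alpha+\mathbf{1}}$. With $r_\alpha$ the rank function of $M_\alpha$, let $g$ be the unique function $\mathbb{Z}^E\to\mathbb{Z}$ with $g(0)=0$ and $g(\alpha+e_I)=g(\alpha)+r_\alpha(I)$ for all $\alpha,I$; for $d$-subsets $B$ of $E$ put $\nu^M(B):=\sup\{e_B^T\alpha-g(\alpha):\alpha\in\mathbb{Z}^E\}\in\mathbb{Z}\cup\{\infty\}$. The support matroid of $M$ is the matroid on $E$ whose bases are the $d$-subsets $B$ with $\nu^M(B)<\infty$. *)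

(* Defs.v *)
From mathcomp Require Import all_boot all_order all_algebra.
Set Implicit Arguments. Unset Strict Implicit. Unset Printing Implicit Defensive.
Import Order.TTheory GRing.Theory Num.Theory.
Local Open Scope ring_scope.

Section Matroids.
Variable E : finType.

Definition is_matroid (Bs : {set {set E}}) : Prop :=
  Bs != set0 /\
  forall B1 B2, B1 \in Bs -> B2 \in Bs -> forall x, x \in B1 :\: B2 ->
    exists2 y, y \in B2 :\: B1 & (B1 :\ x) :|: [set y] \in Bs.

Definition is_matroid_rank (d : nat) (Bs : {set {set E}}) : Prop :=
  is_matroid Bs /\ forall B, B \in Bs -> #|B| = d.

Definition is_loop (Bs : {set {set E}}) (i : E) : bool := [forall B in Bs, i \notin B].
Definition is_coloop (Bs : {set {set E}}) (i : E) : bool := [forall B in Bs, i \in B].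

(* Deletion M \ i and contraction M / i, as matroids on E - i
   (bases are subsets of E avoiding i). *)
Definition deletion (Bs : {set {set E}}) (i : E) : {set {set E}} :=
  if is_coloop Bs i then [set B :\ i | B in Bs] else [set B in Bs | i \notin B].

Definition contraction (Bs : {set {set E}}) (i : E) : {set {set E}} :=
  if is_loop Bs i then Bs else [set B :\ i | B in [set B in Bs | i \in B]].

Definition rk (Bs : {set {set E}}) (I : {set E}) : nat := \max_(B in Bs) #|I :&: B|.

Definition eI (I : {set E}) : {ffun E -> int} := [ffun j => ((j \in I) : nat)%:Z].
Definition e1 (i : E) : {ffun E -> int} := eI [set i].
Definition one : {ffun E -> int} := eI setT.

Definition is_flock (d : nat) (M : {ffun E -> int} -> {set {set E}}) : Prop :=
  (forall a, is_matroid_rank d (M a)) /\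
  (forall a i, contraction (M a) i = deletion (M (a + e1 i)) i) /\
  (forall a, M a = M (a + one)).

Definition is_g (M : {ffun E -> int} -> {set {set E}}) (g : {ffun E -> int} -> int) : Prop :=
  g 0 = 0 /\ forall a I, g (a + eI I) = g a + (rk (M a) I)%:Z.

(* nu^M(B) < infinity, i.e. sup_a (e_B^T a - g a) is finite *)
Definition nu_finite (g : {ffun E -> int} -> int) (B : {set E}) : Prop :=
  exists c : int, forall a : {ffun E -> int}, (\sum_(i in B) a i) - g a <= c.

Definition support_basis (d : nat) (g : {ffun E -> int} -> int) (B : {set E}) : Prop :=
  #|B| = d /\ nu_finite g B.

End Matroids.

(* Main.v *)
Require Import Defs.
From mathcomp Require Import all_boot all_order all_algebra.
From mathcomp Require Import zify ring.
Import Order.TTheory GRing.Theory Num.Theory.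
Local Open Scope ring_scope.

Section Gen.
Variable E : finType.
Implicit Types (Bs : {set {set E}}) (I B : {set E}).

Lemma rk_ge Bs I B : B \in Bs -> (#|I :&: B| <= rk Bs I)%N.
Proof. by move=> HB; rewrite /rk; apply: leq_bigmax_cond. Qed.

Lemma rk_contraction_le Bs I j : (rk (contraction Bs j) I <= rk Bs I)%N.
Proof.
rewrite /contraction; case: ifP => _ //.
apply/bigmax_leqP => B' /imsetP [B]; rewrite inE => /andP [HB _] ->.
apply: (leq_trans _ (@rk_ge _ I _ HB)); apply: subset_leq_card.
by apply: setIS; apply: subsetDl.
Qed.

Lemma rk_deletion_ge Bs I j : is_matroid Bs -> j \notin I ->
  (rk Bs I <= rk (deletion Bs j) I)%N.
Proof.
move=> [_ Hex] jI; rewrite /deletion; case: ifP => Hcol.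
  apply/bigmax_leqP => B HB.
  have HB' : B :\ j \in [set B :\ j | B in Bs] by apply: imset_f.
  apply: (leq_trans _ (@rk_ge _ I _ HB')); apply: subset_leq_card.
  apply/subsetP => x; rewrite !inE => /andP [xI xB].
  by rewrite xI xB andbT; apply: contraNneq jI => <-.
apply/bigmax_leqP => B HB.
case jB: (j \in B).
  move/negbT: Hcol; rewrite negb_forall_in => /exists_inP [B2 HB2 jB2].
  have jd : j \in B :\: B2 by rewrite inE jB jB2.
  have [y yB2 HB3] := Hex B B2 HB HB2 j jd.
  have HB3' : (B :\ j) :|: [set y] \in [set B in Bs | j \notin B].
    rewrite inE HB3 /= !inE negb_or eqxx /=.
    move: yB2; rewrite inE => /andP [_ yB2].
    by apply: contraNneq jB2 => ->.
  apply: (leq_trans _ (@rk_ge _ I _ HB3')); apply: subset_leq_card.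
  apply/subsetP => x; rewrite !inE => /andP [xI xB].
  rewrite xI xB /= andbT.
  by have -> : x != j by apply: contraNneq jI => <-.
have HB' : B \in [set B in Bs | j \notin B] by rewrite inE HB jB.
exact: rk_ge.
Qed.

End Gen.

Section Flock.
Variables (E : finType) (d : nat) (M : {ffun E -> int} -> {set {set E}})
  (g : {ffun E -> int} -> int).
Hypothesis HF : is_flock d M.
Hypothesis Hg : is_g M g.

Lemma L1 (b : {ffun E -> int}) (j : E) (I : {set E}) : j \notin I -> leq (rk (M (b + e1 j)) I) (rk (M b) I).
Proof.
move=> jI; have [Hm [Hc _]] := HF.
apply: (leq_trans (@rk_deletion_ge E _ I j (proj1 (Hm _)) jI)).
rewrite -Hc; exact: rk_contraction_le.
Qed.

Lemma oneE k (i : E) : ((@Defs.one E) *+ k) i = k%:Z.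
Proof. rewrite ffunMnE ffunE in_setT; change ((1 : int) *+ k = k%:Z); by rewrite natz. Qed.

Lemma shiftM (a : {ffun E -> int}) k : M (a + @Defs.one E *+ k) = M a.
Proof.
elim: k => [|k IH]; first by rewrite mulr0n addr0.
by rewrite mulrSr addrA -(proj2 (proj2 HF)).
Qed.

Lemma L2 (I : {set E}) m : forall (c w : {ffun E -> int}), (forall i, 0 <= w i) -> (forall i, i \in I -> w i = 0) ->
  \sum_i w i = m%:Z -> leq (rk (M c) I) (rk (M (c - w)) I).
Proof.
elim: m => [|m IH] c w w0 wI ws.
  have Hz := psumr_eq0P (fun i _ => w0 i) ws.
  have -> : w = 0 by apply/ffunP => i; rewrite ffunE Hz.
  by rewrite subr0.
case: (pickP (fun j => w j != 0)) => [j wj | H0]; last first.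
  move: ws; rewrite big1 // => i _; by move/negbFE/eqP: (H0 i).
have jI : j \notin I by apply: contra wj => /wI ->.
set w' := w - e1 j.
have w'E i : w' i = w i - ((i \in [set j]) : nat)%:Z by rewrite /w' !ffunE.
have := IH c w'.
have -> : c - w = c - w' - e1 j by rewrite /w' opprB addrA addrAC addrK.
have h1 : forall i, 0 <= w' i.
  move=> i; rewrite w'E inE; case: eqP => [-> | _] /=.
    by have := w0 j; move: wj; lia.
  by have := w0 i; lia.
have h2 : forall i, i \in I -> w' i = 0.
  by move=> i iI; rewrite w'E inE; case: eqP => [ej | _]; [by move: iI; rewrite ej (negbTE jI) | by rewrite wI].
have h3 : \sum_i w' i = m%:Z.
  rewrite (eq_bigr (fun i => w i - ((i \in [set j]) : nat)%:Z)) // sumrB ws.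
  rewrite (bigD1 j) //= big1 ?inE ?eqxx; first by lia.
  by move=> i ij; rewrite inE (negbTE ij).
move=> H; apply: (leq_trans (H h1 h2 h3)).
by have := @L1 (c - w' - e1 j) j I jI; rewrite subrK.
Qed.


Definition h (B : {set E}) (b : {ffun E -> int}) : int := \sum_(i in B) b i - g b.

Lemma cntE (B I : {set E}) : \sum_(i in B) (((i \in I) : nat)%:Z) = (#|I :&: B|)%:Z.
Proof.
have Hn : (\sum_(i in B) ((i \in I) : nat))%N = #|I :&: B|.
  rewrite -sum1_card big_mkcond [in RHS]big_mkcond /=.
  by apply: eq_bigr => i _; rewrite inE; case: (i \in I); case: (i \in B).
rewrite -Hn; elim/big_rec2: _ => // i x y _ ->; by rewrite PoszD.
Qed.

Lemma hstep (B : {set E}) (b : {ffun E -> int}) (I : {set E}) :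
  h B (b + eI I) = h B b + (#|I :&: B|)%:Z - (rk (M b) I)%:Z.
Proof.
rewrite /h (proj2 Hg).
rewrite (eq_bigr (fun i => b i + ((i \in I):nat)%:Z)); last by move=> i _; rewrite !ffunE.
rewrite big_split /= cntE; ring.
Qed.

Lemma rkT (b : {ffun E -> int}) : rk (M b) setT = d.
Proof.
have [[Hne _] Hcard] := (proj1 HF) b.
apply/eqP; rewrite eqn_leq; apply/andP; split.
  by apply/bigmax_leqP => B HB; rewrite setTI (Hcard B HB).
have/set0Pn [B HB] := Hne.
rewrite -(Hcard B HB) -{1}(setTI B); exact: rk_ge.
Qed.

Lemma hshift (B : {set E}) (b : {ffun E -> int}) k : #|B| = d ->
  h B (b + @Defs.one E *+ k) = h B b.
Proof.
move=> Hc; elim: k => [|k IH]; first by rewrite mulr0n addr0.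
rewrite mulrSr addrA hstep setTI rkT Hc IH; lia.
Qed.

Lemma keyK (a b' : {ffun E -> int}) (I : {set E}) n :
  (forall i, 0 <= b' i - a i <= n%:Z) -> (forall i, i \in I -> b' i - a i = n%:Z) ->
  (rk (M a) I <= rk (M b') I)%N.
Proof.
move=> H1 H2.
rewrite -(shiftM a n).
set w := (a + @Defs.one E *+ n) - b'.
have wE i : w i = a i + n%:Z - b' i by rewrite /w !ffunE oneE.
have -> : b' = (a + @Defs.one E *+ n) - w.
  by rewrite /w opprB addrC subrK.
clearbody w.
have w0 : forall i, 0 <= w i by move=> i; rewrite wE; have := H1 i; lia.
apply: (@L2 I (absz (\sum_i w i))) => //.
  by move=> i iI; rewrite wE; have := H2 i iI; lia.
by rewrite gez0_abs // sumr_ge0.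
Qed.

Lemma dir1 (B : {set E}) (a : {ffun E -> int}) : B \in M a -> forall b, h B b <= h B a.
Proof.
move=> HB.
have Hc : #|B| = d by have [_ Hcard] := (proj1 HF) a; exact: Hcard.
have P : forall n (b : {ffun E -> int}), (forall i, 0 <= b i - a i <= n%:Z) -> h B b <= h B a.
  elim=> [|n IH] b Hb.
    have -> : b = a by apply/ffunP => i; have := Hb i; lia.
    done.
  set I := [set i | b i - a i == n.+1%:Z].
  set b' := b - eI I.
  have b'E i : b' i = b i - ((i \in I):nat)%:Z by rewrite !ffunE.
  have Hb' : forall i, 0 <= b' i - a i <= n%:Z.
    move=> i; rewrite b'E inE; have := Hb i.
    by case: eqP => [e | ne] /=; lia.
  have HI : forall i, i \in I -> b' i - a i = n%:Z.
    by move=> i iI; rewrite b'E iI; move: iI; rewrite inE => /eqP; lia.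
  have Hr := @keyK a b' I n Hb' HI.
  have := IH b' Hb'.
  have -> : b = b' + eI I by rewrite subrK.
  rewrite hstep.
  have : (#|I :&: B| <= rk (M a) I)%N by apply: rk_ge.
  lia.
move=> b.
pose K : int := \sum_i `|a i - b i|.
have K0 : 0 <= K by apply: sumr_ge0.
have Kb : forall i, `|a i - b i| <= K.
  by move=> i; rewrite /K (bigD1 i) //= lerDl sumr_ge0.
rewrite -(hshift B b (absz K) Hc).
apply: (P (absz K + absz K)%N) => i.
rewrite ffunE oneE PoszD gez0_abs //.
have := Kb i; rewrite ler_norml => /andP [k1 k2].
move: k1 k2 K0; clear Kb; move: (a i) (b i) K => x y z; lia.
Qed.

Lemma dir2 (B : {set E}) c : #|B| = d -> (forall b, h B b <= c) -> exists a, B \in M a.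
Proof.
move=> Hc Hb.
have Hex : forall n : nat, forall b, c - h B b <= n%:Z -> exists a, h B (a + eI B) <= h B a.
  elim=> [|n IH] b Hn.
    by exists b; have := Hb (b + eI B); lia.
  case: (lerP (h B (b + eI B)) (h B b)) => H; first by exists b.
  by apply: (IH (b + eI B)); lia.
have H0 : c - h B 0%R <= (absz (c - h B 0%R))%:Z by rewrite abszE ler_norm.
have [a Ha] := Hex _ _ H0.
exists a.
rewrite hstep setIid in Ha.
have Hle : (#|B| <= rk (M a) B)%N by lia.
have [[Hne _] Hcard] := (proj1 HF) a.
have Hpos : (0 < #|M a|)%N by rewrite card_gt0.
have [B' HB' Hmax] := @eq_bigmax_cond _ (mem (M a)) (fun B' => #|B :&: B'|) Hpos.
rewrite /rk Hmax in Hle.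
have HBB : B :&: B' = B by apply/eqP; rewrite eqEcard subsetIl.
have sub : B \subset B' by apply/setIidPl.
have -> : B = B'.
  by apply/eqP; rewrite eqEcard sub (Hcard B' HB') Hc /=.
done.
Qed.

End Flock.


Theorem mainTheorem14 (E : finType) (d : nat)
  (M : {ffun E -> int} -> {set {set E}}) (g : {ffun E -> int} -> int) :
  is_flock d M -> is_g M g ->
  forall B : {set E}, support_basis d g B <-> exists a : {ffun E -> int}, B \in M a.
Proof.
move=> HF Hg B; split.
  move=> [Hc [c Hb]]; exact: (@dir2 E d M g HF Hg B c Hc Hb).
move=> [a Ha]; split.
  by have [_ Hcard] := (proj1 HF) a; exact: Hcard.
exists (@h E g B a) => b; exact: (@dir1 E d M g HF Hg B a Ha).
Qed.
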